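(* Let $A\in\mathbb{R}^{d\times d}$, $N\ge1$, real coefficients $h_{k,j}$ ($1\le k\le N$, $0\le j\le k-1$), and $x_{k+1}=x_k-\sum_{j=0}^k h_{k+1,j}Ax_j$ for $k=0,\dots,N-1$. Then for $k=1,\dots,N$, \[ x_k=\sum_{m=0}^{k}(-1)^mP(k,m)A^mx_0, \] where $P(k,0)=1$ and, for $1\le m\le k$, $P(k,m)=\sum\prod_{\ell=1}^m h_{i(\ell),j(\ell)}$, the sum ranging over all integer sequences $(i(1),j(1)),\dots,(i(m),j(m))$ with $0\le j(\ell)<i(\ell)$ for all $\ell$, $i(\ell)\le j(\ell+1)$ for $\ell=1,\dots,m-1$, and $i(m)\le k$. *)

(* Defs.v *)
From HB Require Import structures.
From mathcomp Require Import all_boot all_order all_algebra.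
From mathcomp Require Import reals.
Set Implicit Arguments. Unset Strict Implicit. Unset Printing Implicit Defensive.
Import Order.TTheory GRing.Theory Num.Theory.
Local Open Scope ring_scope.

(* An index sequence (i(1),j(1)),...,(i(m),j(m)) is encoded as a finite
   function s : 'I_m -> 'I_(k.+1) * 'I_(k.+1), with (s l) = (i(l+1), j(l+1)).
   The constraints 0 <= j(l) < i(l), i(l) <= j(l+1), i(m) <= k force all
   entries to lie in {0,...,k}, so the range 'I_(k.+1) loses no sequence. *)
Definition admissible (k m : nat) (s : {ffun 'I_m -> 'I_k.+1 * 'I_k.+1}) : bool :=
  [&& [forall l : 'I_m, ((s l).2 < (s l).1)%N],
      [forall l : 'I_m, forall l' : 'I_m,
          ((l' : nat).+1 == l) ==> ((s l').1 <= (s l).2)%N]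
    & [forall l : 'I_m, ((l : nat).+1 == m) ==> ((s l).1 <= k)%N]].

Definition P {R : pzRingType} (h : nat -> nat -> R) (k m : nat) : R :=
  if m == 0%N then 1 else
  \sum_(s : {ffun 'I_m -> 'I_k.+1 * 'I_k.+1} | admissible s)
     \prod_(l < m) h (s l).1 (s l).2.

(* Main.v *)
Require Import Defs.
From HB Require Import structures.
From mathcomp Require Import all_boot all_order all_algebra.
From mathcomp Require Import reals.
From mathcomp Require Import ring.
Set Implicit Arguments. Unset Strict Implicit. Unset Printing Implicit Defensive.
Import Order.TTheory GRing.Theory Num.Theory.
Local Open Scope ring_scope.

Definition admG {K : nat} (k m : nat) (s : {ffun 'I_m -> 'I_K * 'I_K}) : bool :=
  [&& [forall l : 'I_m, ((s l).2 < (s l).1)%N],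
      [forall l : 'I_m, forall l' : 'I_m,
          ((l' : nat).+1 == l) ==> ((s l').1 <= (s l).2)%N]
    & [forall l : 'I_m, ((l : nat).+1 == m) ==> ((s l).1 <= k)%N]].

Definition ext (T : Type) m (g : {ffun 'I_m -> T}) (t : T) : {ffun 'I_m.+1 -> T} :=
  [ffun i => if unlift ord_max i is Some j then g j else t].

Lemma ext_lift T m (g : {ffun 'I_m -> T}) t j : ext g t (lift ord_max j) = g j.
Proof. by rewrite ffunE liftK. Qed.
Lemma ext_max T m (g : {ffun 'I_m -> T}) t : ext g t ord_max = t.
Proof. by rewrite ffunE unlift_none. Qed.

Lemma sum_ffunS (R : nmodType) (T : finType) m (P : pred {ffun 'I_m.+1 -> T})
  (F : {ffun 'I_m.+1 -> T} -> R) :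
  \sum_(f | P f) F f = \sum_(p : T * {ffun 'I_m -> T} | P (ext p.2 p.1)) F (ext p.2 p.1).
Proof.
rewrite (reindex (fun p : T * {ffun 'I_m -> T} => ext p.2 p.1)) //.
exists (fun f : {ffun 'I_m.+1 -> T} => (f ord_max, [ffun j : 'I_m => f (lift ord_max j)])) => [p _|f _].
  case: p => t g /=; rewrite ext_max; congr pair; apply/ffunP => j.
  by rewrite ffunE ext_lift.
apply/ffunP => i; rewrite ffunE /=.
by case: unliftP => [j ->|->]; rewrite ?ffunE.
Qed.

Lemma adm_ext K k m (g : {ffun 'I_m -> 'I_K * 'I_K}) t :
  admG k (ext g t) = [&& ((t.1 <= k)%N && (t.2 < t.1)%N) & admG t.2 g].
Proof.
apply/idP/idP.
- case/and3P => /forallP H1 /forallP H2 /forallP H3.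
  have := H1 ord_max; have := H3 ord_max; rewrite !ext_max eqxx /= => -> -> /=.
  apply/and3P; split.
  + by apply/forallP => l; have := H1 (lift ord_max l); rewrite ext_lift.
  + apply/forallP => l; apply/forallP => l'; apply/implyP => e.
    have := forallP (H2 (lift ord_max l)) (lift ord_max l').
    by rewrite !ext_lift !lift_max e.
  + apply/forallP => l; apply/implyP => e.
    have := forallP (H2 ord_max) (lift ord_max l).
    by rewrite ext_lift ext_max lift_max e.
- case/andP => /andP [tk tt] /and3P [/forallP H1 /forallP H2 /forallP H3].
  apply/and3P; split.
  + by apply/forallP => l; case: (unliftP ord_max l) => [j ->|->];
       rewrite ?ext_lift ?ext_max.
  + apply/forallP => l; apply/forallP => l'; apply/implyP => /eqP e.
    case: (unliftP ord_max l') e => [j' ->|->] e.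
    * rewrite ext_lift lift_max in e *.
      case: (unliftP ord_max l) e => [j ->|->] e.
      - by rewrite ext_lift; rewrite lift_max in e; have := forallP (H2 j) j'; rewrite e eqxx.
      - by rewrite ext_max; have := H3 j'; rewrite e /= eqxx.
    * by move: (ltn_ord l); rewrite -e /= ltnn.
  + apply/forallP => l; apply/implyP => /eqP e.
    case: (unliftP ord_max l) e => [j ->|->] e.
    * have lt : (j < m)%N := ltn_ord j.
      by rewrite lift_max in e; case: e => ej; rewrite ej ltnn in lt.
    * by rewrite ext_max.
Qed.

Fixpoint Q (R : pzRingType) (h : nat -> nat -> R) (k m : nat) : R :=
  match m with
  | 0 => 1
  | m'.+1 => \sum_(i < k.+1) \sum_(j < i) h i j * Q h j m'
  end.

Definition G (R : comPzRingType) (h : nat -> nat -> R) K k m :=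
  \sum_(s : {ffun 'I_m -> 'I_K * 'I_K} | admG k s) \prod_(l < m) h (s l).1 (s l).2.

Lemma GQ (R : comPzRingType) (h : nat -> nat -> R) K m k : (k < K)%N -> G h K k m = Q h k m.
Proof.
elim: m k => [|m IH] k ltkK.
  rewrite /G (eq_bigl xpredT); last first.
    move=> s; apply/and3P; split; apply/forallP; case=> //.
  rewrite (eq_bigr (fun _ => 1)); last by move=> s _; rewrite big_ord0.
  by rewrite sumr_const card_ffun card_ord expn0.
rewrite /G sum_ffunS.
rewrite (eq_bigl (fun p : ('I_K * 'I_K) * {ffun 'I_m -> 'I_K * 'I_K} => ((p.1.1 <= k)%N && (p.1.2 < p.1.1)%N) && admG p.1.2 p.2));
  last by move=> p; rewrite adm_ext.
rewrite (eq_bigr (fun p : ('I_K * 'I_K) * {ffun 'I_m -> 'I_K * 'I_K} => h p.1.1 p.1.2 * \prod_(l < m) h (p.2 l).1 (p.2 l).2)); last first.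
  move=> p _; rewrite big_ord_recr /= ext_max mulrC; congr (_ * _).
  apply: eq_bigr => l _.
  have -> : widen_ord (leqnSn m) l = lift ord_max l by by apply: val_inj; rewrite /= /bump leqNgt ltn_ord.
  by rewrite ext_lift.
rewrite -(pair_big_dep (fun t : 'I_K * 'I_K => (t.1 <= k)%N && (t.2 < t.1)%N)
   (fun t g => admG t.2 g) (fun t g => h t.1 t.2 * \prod_(l < m) h (g l).1 (g l).2)) /=.
rewrite (eq_bigr (fun t : 'I_K * 'I_K => h t.1 t.2 * Q h t.2 m)); last first.
  move=> t /andP[tk tt]; rewrite -mulr_sumr; congr (_ * _); apply: IH.
  by apply: leq_ltn_trans ltkK; apply: leq_trans (ltnW tt) tk.
rewrite -(pair_big_dep (fun i : 'I_K => (i <= k)%N) (fun i (j : 'I_K) => (j < i)%N)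
   (fun i j => h i j * Q h j m)) /=.
rewrite /= (big_ord_widen K (fun i => \sum_(j < i) h i j * Q h j m)) //.
apply: eq_big => [i|i _]; first by rewrite ltnS.
by rewrite (big_ord_widen K (fun j => h i j * Q h j m)) // ltnW.
Qed.

Lemma PQ (R : comPzRingType) (h : nat -> nat -> R) k m : P h k m = Q h k m.
Proof. case: m => [|m] //; exact: (GQ h m.+1 (ltnSn k)). Qed.

Lemma Q0 (R : pzRingType) (h : nat -> nat -> R) m k : (k < m)%N -> Q h k m = 0.
Proof.
elim: m k => [|m IH] k //= km.
apply: big1 => i _; apply: big1 => j _; rewrite IH ?mulr0 //.
have := ltn_ord i; have := ltn_ord j. move=> a b. 
by rewrite -ltnS; apply: leq_trans km; apply: leq_trans b; rewrite ltnS.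
Qed.

Definition S (R : realType) d (A : 'M[R]_d) (h : nat -> nat -> R) (x0 : 'cV[R]_d) n j :=
  \sum_(m < n) ((-1) ^+ m * Q h j m) *: (A ^+ m *m x0).

Lemma Swiden (R : realType) d (A : 'M[R]_d) h x0 n j : (j < n)%N -> S A h x0 n j = S A h x0 j.+1 j.
Proof.
move=> jn; rewrite /S [RHS](big_ord_widen n (fun m => ((-1) ^+ m * Q h j m) *: (A ^+ m *m x0))) //.
rewrite [RHS]big_mkcond /=; apply: eq_bigr => i _; case: ifP => // /negbT.
by rewrite -leqNgt => ji; rewrite Q0 ?mulr0 ?scale0r.
Qed.

Lemma AS (R : realType) d (A : 'M[R]_d) h x0 n j :
  A *m S A h x0 n j = \sum_(m < n) ((-1) ^+ m * Q h j m) *: (A ^+ m.+1 *m x0).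
Proof.
rewrite /S mulmx_sumr; apply: eq_bigr => m _.
by rewrite -scalemxAr mulmxA exprS mulmxE.
Qed.

Theorem lemmaI2 (R : realType) (d N : nat) (A : 'M[R]_d)
    (h : nat -> nat -> R) (x : nat -> 'cV[R]_d) :
  (1 <= N)%N ->
  (forall k : nat, (k < N)%N ->
     x k.+1 = x k - \sum_(j < k.+1) h k.+1 j *: (A *m x j)) ->
  forall k : nat, (1 <= k <= N)%N ->
    x k = \sum_(m < k.+1) ((-1) ^+ m * P h k m) *: (A ^+ m *m x 0%N).
Proof.
move=> N1 rec.
suff H : forall k, (k <= N)%N -> forall j, (j <= k)%N -> x j = S A h (x 0%N) j.+1 j.
  move=> k /andP[_ kN]; rewrite (H k kN k (leqnn k)) /S.
  by apply: eq_bigr => m _; rewrite PQ.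
elim=> [|k IH] kN j jk.
  rewrite leqn0 in jk; move/eqP: jk => ->.
  by rewrite /S big_ord1 /= expr0 mulr1 scale1r mul1mx.
rewrite leq_eqVlt in jk; case/orP: jk => [/eqP ->|jk]; last exact: (IH (ltnW kN) j jk).
clear j.
rewrite rec // (IH (ltnW kN) k (leqnn k)) -(@Swiden _ _ A h (x 0%N) k.+2 k) //.
rewrite (eq_bigr (fun j : 'I_k.+1 => h k.+1 j *: (A *m S A h (x 0%N) k.+1 j))); last first.
  by move=> j _; rewrite (IH (ltnW kN) j (ltn_ord j)) -(@Swiden _ _ A h (x 0%N) k.+1 j).
under eq_bigr do rewrite AS scaler_sumr.
rewrite exchange_big /=.
rewrite /S big_ord_recl [in RHS]big_ord_recl -addrA -sumrB.
congr (_ + _).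
apply: eq_bigr => m _ /=.
rewrite (eq_bigr (fun j : 'I_k.+1 => (h k.+1 j * ((-1) ^+ m * Q h j m)) *: (A ^+ m.+1 *m x 0%N))); last first.
  by move=> j _; rewrite scalerA.
rewrite -scaler_suml -scalerBl; congr (_ *: _).
have -> : bump 0 m = m.+1 by [].
rewrite add0n [in RHS]big_ord_recr /=.
rewrite [X in _ - X](eq_bigr (fun j : 'I_k.+1 => (-1) ^+ m * (h k.+1 j * Q h j m))); last first.
  by move=> j _; rewrite mulrCA.
rewrite -mulr_sumr exprS. ring.
Qed.
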